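(* Let $0\le\beta<\alpha<\infty$ and $1<p<q<\infty$ with $\frac1p-\frac1q=\frac{\alpha-\beta}{\mathbf N}$. Suppose that to each cube $Q\subseteq\mathbb R^N$ a function $h^Q$ defined on $Q$ is associated, and for $\gamma\ge0$ set $$h_\gamma(x)=\sup_{Q\ni x}\frac{1}{\omega(Q)^{1+\gamma/\mathbf N}}\int_Q|h^Q(y)|\,d\omega(y),\qquad x\in\mathbb R^N,$$ the supremum over all cubes $Q$ containing $x$. Then $\|h_\beta\|_{L^q_\omega}\le C\|h_\alpha\|_{L^p_\omega}$, where $C$ depends only on $p,q,\alpha$ and $\omega$.
   Context: Let $R\subset\mathbb R^N\setminus\{0\}$ be a root system (finite, invariant under the reflections $\sigma_\alpha(x)=x-2\langle x,\alpha\rangle\alpha/\|\alpha\|^2$), normalized so that $\langle\alpha,\alpha\rangle=2$; $G$ the generated reflection group; $\kappa\ge0$ a $G$-invariant multiplicity function; $d\omega(x)=\prod_{\alpha\in R}|\langle\alpha,x\rangle|^{\kappa(\alpha)}dx$; $\mathbf N=N+\sum_{\alpha\in R}\kappa(\alpha)$; $L^p_\omega=L^p(\mathbb R^N,\omega)$. Cubes are Euclidean cubes in $\mathbb R^N$. *)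

(* Defs.v *)
From HB Require Import structures.
From mathcomp Require Import all_boot all_order all_algebra.
From mathcomp Require Import all_classical all_reals all_analysis.
Set Implicit Arguments. Unset Strict Implicit. Unset Printing Implicit Defensive.
Import Order.TTheory GRing.Theory Num.Theory.
Local Open Scope classical_set_scope.
Local Open Scope ring_scope.

Section defs.
Variables (R : realType) (N : nat).
Notation vec := (N.-tuple R).

Definition dotp (x y : vec) : R := \sum_(i < N) tnth x i * tnth y i.

Definition refl (a x : vec) : vec :=
  [tuple tnth x i - (2 * dotp x a / dotp a a) * tnth a i | i < N].

Definition root_system (rs : seq vec) : Prop :=
  uniq rs /\
  (forall a, a \in rs -> a != [tuple 0 | i < N]) /\
  (forall a b, a \in rs -> b \in rs -> refl a b \in rs) /\
  (forall a, a \in rs -> dotp a a = 2).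

(* action of the element of the reflection group G given by the word
   s (a list of roots) : the product of the reflections sigma_a, a in s *)
Definition Gact (s : seq vec) (x : vec) : vec := foldr refl x s.

Definition multiplicity (rs : seq vec) (kappa : vec -> R) : Prop :=
  (forall a, a \in rs -> 0 <= kappa a) /\
  (forall (s : seq vec) a, all (fun b => b \in rs) s -> a \in rs ->
     kappa (Gact s a) = kappa a).

(* density of d omega w.r.t. Lebesgue measure *)
Definition weight (rs : seq vec) (kappa : vec -> R) (x : vec) : R :=
  \prod_(a <- rs) (`|dotp a x| `^ kappa a).

Definition homdim (rs : seq vec) (kappa : vec -> R) : R :=
  N%:R + \sum_(a <- rs) kappa a.

Definition cube (a : vec) (l : R) : set vec :=
  [set x | forall i : 'I_N, tnth a i <= tnth x i <= tnth a i + l].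

Definition box (a b : vec) : set vec :=
  [set x | forall i : 'I_N, tnth a i <= tnth x i <= tnth b i].

Definition is_lebesgue (lam : {measure set vec -> \bar R}) : Prop :=
  forall a b : vec, (forall i, tnth a i <= tnth b i) ->
    lam (box a b) = (\prod_(i < N) (tnth b i - tnth a i))%:E.

Variables (lam : {measure set vec -> \bar R}) (rs : seq vec) (kappa : vec -> R).

Definition omega (A : set vec) : \bar R :=
  (\int[lam]_(x in A) (weight rs kappa x)%:E)%E.

(* h_gamma(x) = sup_{Q cube, x in Q} omega(Q)^{-1-gamma/bN} int_Q |h^Q| d omega,
   where h a l is the function h^Q attached to the cube Q = cube a l (l > 0) *)
Definition hgamma (h : vec -> R -> vec -> R) (gamma : R) (x : vec) : \bar R :=
  ereal_sup [set r | exists a l, 0 < l /\ cube a l x /\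
     r = (((fine (omega (cube a l))) `^ (- (1 + gamma / homdim rs kappa)))%:E *
         (\int[lam]_(y in cube a l) (`|h a l y| * weight rs kappa y)%:E))%E ].

Definition Lpw (p : R) (f : vec -> \bar R) : \bar R :=
  ((\int[lam]_x ((`|f x|)%E `^ p * (weight rs kappa x)%:E)) `^ (p^-1))%E.

End defs.

(* Main.v *)
Require Import Defs.
From HB Require Import structures.
From mathcomp Require Import all_boot all_order all_algebra.
From mathcomp Require Import all_classical all_reals all_analysis.
From mathcomp Require Import ring lra.
Import Order.TTheory GRing.Theory Num.Theory.
Local Open Scope classical_set_scope.
Local Open Scope ring_scope.
Import HBNNSimple.

Section aux.
Context d (T : measurableType d) (R : realType).
Variable mu : {measure set T -> \bar R}.
Local Open Scope ereal_scope.

Lemma nnint_le (f g : T -> \bar R) : (forall x, 0 <= f x) ->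
  (forall x, f x <= g x) -> \int[mu]_x f x <= \int[mu]_x g x.
Proof.
move=> f0 fg; have g0 x : 0 <= g x by apply: le_trans (fg x).
rewrite !ge0_integralTE//; apply: ereal_sup_le => _ [h hf <-] /=.
by exists h => // x; apply: le_trans (fg x).
Qed.

Lemma nnint_scale (f : T -> \bar R) (c : R) : (0 <= c)%R -> (forall x, 0 <= f x) ->
  \int[mu]_x (c%:E * f x) = c%:E * \int[mu]_x f x.
Proof.
move=> c0 f0; have [c_eq0|cpos] := eqVneq c 0%R.
  rewrite c_eq0 mul0e; transitivity (\int[mu]_x (cst 0 x)); last exact: integral0.
  by apply: eq_integral => x _; rewrite mul0e.
have cgt0 : (0 < c)%R by rewrite lt0r cpos.
have cf0 x : 0 <= c%:E * f x by rewrite mule_ge0.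
rewrite !ge0_integralTE// -ereal_sup_pZl//; congr ereal_sup.
apply/seteqP; split => t /=.
- move=> [h hf <-] {t}.
  have ci0 : (0 <= c^-1)%R by rewrite invr_ge0 ltW.
  exists (sintegral mu (scale_nnsfun h ci0)).
    exists (scale_nnsfun h ci0) => // x /=.
    rewrite EFinM -(@lee_pmul2l _ c%:E) ?lte_fin// muleA -EFinM mulfV//.
    by rewrite mul1r.
  rewrite -sintegralrM; apply: eq_sintegral => x /=.
  by rewrite mulrA mulfV// mul1r.
- move=> [_ [h hf <-] <-] {t}.
  exists (scale_nnsfun h (ltW cgt0)).
    by move=> x /=; rewrite EFinM lee_pmul2l ?lte_fin.
  by rewrite -sintegralrM.
Qed.

End aux.

Lemma powR_mono (R : realType) (r a b : R) : 0 <= r -> 0 <= a -> a <= b ->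
  a `^ r <= b `^ r.
Proof.
move=> r0 a0 ab; apply: (ge0_ler_powR r0) => //; rewrite nnegrE//.
exact: le_trans ab.
Qed.

Lemma real_key (R : realType) (p q th t m u s : R) :
  0 < p -> p < q -> th = p^-1 - q^-1 -> 0 <= t -> 0 < m -> t <= u ->
  t `^ p * m <= s ->
  m `^ th * t <= u `^ (p / q) * s `^ th.
Proof.
move=> p0 pq thE t0 m0 tu tms.
have q0 : 0 < q by apply: lt_trans pq.
have th0 : 0 <= th.
  by rewrite thE subr_ge0 lef_pV2 ?posrE// ltW.
have [->|tpos] := eqVneq t 0; first by rewrite mulr0 mulr_ge0 ?powR_ge0.
have tgt0 : 0 < t by rewrite lt0r tpos.
have e1 : p / q + p * th = 1.
  by rewrite thE mulrBr mulfV ?gt_eqF// addrC subrK.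
have -> : t = t `^ (p / q) * t `^ (p * th) by rewrite -powRD ?tpos ?implybT // e1 powRr1 ?ltW.
rewrite mulrCA; apply: ler_pM; rewrite ?mulr_ge0 ?powR_ge0//.
  by apply: powR_mono => //; exact: divr_ge0 (ltW p0) (ltW q0).
rewrite (powRrM t p th) -powRM ?powR_ge0 //; last exact: ltW.
apply: powR_mono => //; first by rewrite mulr_ge0 ?powR_ge0 // ltW.
by rewrite mulrC.
Qed.

Theorem lemma4p7 (R : realType) (N : nat) (rs : seq (N.-tuple R))
    (kappa : N.-tuple R -> R)
    (lam : {measure set (N.-tuple R) -> \bar R})
    (alpha beta p q : R) :
  root_system rs -> multiplicity rs kappa -> is_lebesgue lam ->
  0 <= beta -> beta < alpha -> 1 < p -> p < q ->
  p^-1 - q^-1 = (alpha - beta) / homdim rs kappa ->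
  exists C : R, 0 < C /\
    forall h : N.-tuple R -> R -> N.-tuple R -> R,
      (forall a l, 0 < l -> measurable_fun (cube a l) (h a l)) ->
      (Lpw lam rs kappa q (hgamma lam rs kappa h beta)
        <= C%:E * Lpw lam rs kappa p (hgamma lam rs kappa h alpha))%E.
Proof.
move=> _ _ _ b0 ba p1 pq E.
set H := homdim rs kappa.
have p0 : 0 < p by apply: lt_trans p1.
have q0 : 0 < q by apply: lt_trans pq.
have thpos : 0 < p^-1 - q^-1 by rewrite subr_gt0 ltf_pV2 ?posrE.
have H0 : 0 < H.
  by move: thpos; rewrite E pmulr_rgt0 ?subr_gt0 // invr_gt0.
exists 1; split => // h _.
set W := weight rs kappa.
set hA := hgamma lam rs kappa h alpha.
set hB := hgamma lam rs kappa h beta.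
set om := omega lam rs kappa.
set I := fun a l => (\int[lam]_(y in cube a l) (`|h a l y| * W y)%:E)%E.
set el := fun g a l => (((fine (om (cube a l))) `^ (- (1 + g / H)))%:E * I a l)%E.
have W0 x : 0 <= W x by rewrite /W /weight; apply: prodr_ge0 => a _; exact: powR_ge0.
have om0 Q : (0 <= om Q)%E by apply: integral_ge0 => x _; rewrite lee_fin.
have I0 a l : (0 <= I a l)%E by apply: integral_ge0 => x _; rewrite lee_fin mulr_ge0.
have el0 g a l : (0 <= el g a l)%E by rewrite mule_ge0 ?lee_fin ?powR_ge0.
have elub g a l x : 0 < l -> cube a l x -> (el g a l <= hgamma lam rs kappa h g x)%E.
  by move=> l0 Qx; apply: ereal_sup_ubound; exists a, l.
have cubex (x : N.-tuple R) : cube x 1 x by move=> i; rewrite lexx /= lerDl.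
have hg0 g x : (0 <= hgamma lam rs kappa h g x)%E.
  exact: le_trans (el0 g x 1) (elub g x 1 x ltr01 (cubex x)).
rewrite /Lpw -/W -/hA -/hB.
set SA := (\int[lam]_x ((`|hA x|) `^ p * (W x)%:E))%E.
have SA0 : (0 <= SA)%E by apply: integral_ge0 => x _; rewrite mule_ge0 ?poweR_ge0 ?lee_fin.
move: SA0; case SAe : SA => [s| |] // s0; last first.
  by rewrite poweRyr ?invr_neq0 ?gt_eqF // mul1e leey.
move: s0; rewrite lee_fin => s0.
have omfin Q : 0 < fine (om Q) -> om Q = (fine (om Q))%:E.
  move=> mpos; apply/esym/fineK; move: mpos (om0 Q); case: (om Q) => //=.
  by rewrite ltxx.
have keyc a l c : 0 < l -> 0 <= c -> (c%:E <= el alpha a l)%E ->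
    0 < fine (om (cube a l)) -> c `^ p * fine (om (cube a l)) <= s.
  move=> l0 c0 cel mpos.
  pose g := fun x => (if x \in cube a l then W x else 0)%:E.
  have pt x : ((c `^ p)%:E * g x <= (`|hA x|) `^ p * (W x)%:E)%E.
    rewrite /g; case: ifPn => xQ.
      apply: lee_wpmul2r; first by rewrite lee_fin.
      rewrite -poweR_EFin; apply: gt0_ler_poweR; rewrite ?in_itv /= ?lee_fin ?c0 ?leey ?abse_ge0 //.
        exact: ltW.
      rewrite gee0_abs; last exact: hg0.
      by apply: le_trans cel (elub _ _ _ _ l0 _); rewrite inE in xQ.
    by rewrite mule0 mule_ge0 ?poweR_ge0 ?lee_fin.
  have f0 x : (0 <= (c `^ p)%:E * g x)%E.
    by rewrite mule_ge0 ?lee_fin ?powR_ge0 // /g; case: ifP.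
  have := @nnint_le _ _ _ lam _ _ f0 pt; rewrite -/SA SAe nnint_scale ?powR_ge0 //; last first.
    by move=> x; rewrite /g; case: ifP; rewrite lee_fin.
  have -> : (\int[lam]_x g x)%E = om (cube a l).
    rewrite /om /omega [RHS]integral_mkcond; apply: eq_integral => x _.
    by rewrite /g /patch; case: ifP.
  by rewrite omfin // -EFinM lee_fin.
have key a l : 0 < l -> 0 < fine (om (cube a l)) -> I a l \is a fin_num.
  move=> l0 mpos; set m := fine (om (cube a l)).
  rewrite ge0_fin_numE ?I0 // ltey; apply/negP => /eqP Iy.
  pose c := ((s + 1) / m) `^ p^-1.
  have c0 : 0 <= c by exact: powR_ge0.
  have := keyc a l c l0 c0.
  rewrite /el Iy gt0_muley ?lte_fin ?powR_gt0 // leey => /(_ isT mpos).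
  rewrite /c -powRrM mulVf ?gt_eqF // powRr1; last first.
    by rewrite divr_ge0 ?addr_ge0 ?ler01 // ltW.
  rewrite divfK ?gt_eqF //.
  by rewrite leNgt ltrDl ltr01.
set th := p^-1 - q^-1.
have F3 x : (hB x <= hA x `^ (p / q) * (s `^ th)%:E)%E.
  have rhs0 : (0 <= hA x `^ (p / q) * (s `^ th)%:E)%E.
    by rewrite mule_ge0 ?poweR_ge0 ?lee_fin ?powR_ge0.
  apply: ge_ereal_sup => _ [a [l [l0 [Qx ->]]]].
  change (el beta a l <= hA x `^ (p / q) * (s `^ th)%:E)%E.
  have m0 : 0 <= fine (om (cube a l)) by apply: fine_ge0.
  move: m0; rewrite le_eqVlt => /predU1P[m0|mpos].
    rewrite /el -m0 powR0 ?mul0e //.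
    by rewrite oppr_eq0 gt_eqF // ltr_wpDr // divr_ge0 // ltW.
  set m := fine (om (cube a l)) in mpos *.
  have Ifin := key a l l0 mpos.
  pose t := m `^ (- (1 + alpha / H)) * fine (I a l).
  have t0 : 0 <= t by rewrite mulr_ge0 ?powR_ge0 // fine_ge0.
  have elA : el alpha a l = t%:E by rewrite /el -(fineK Ifin) -EFinM.
  have tms : t `^ p * m <= s by apply: (keyc a l t l0 t0 _ mpos); rewrite elA.
  have elB : el beta a l = (m `^ th * t)%:E.
    rewrite /el -(fineK Ifin) -EFinM /t mulrA -powRD; last by rewrite (gt_eqF mpos) implybT.
    rewrite /m /th E; congr (_ `^ _ * _)%:E.
    rewrite -/H; field; exact: lt0r_neq0.
  have tA : (t%:E <= hA x)%E by rewrite -elA; exact: elub.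
  rewrite elB; move: tA (hg0 alpha x); case: (hA x) => [u| |] // tA _.
    rewrite poweR_EFin -EFinM lee_fin.
    by apply: (@real_key R p q th t m u s p0 pq erefl t0 mpos _ tms); rewrite -lee_fin.
  have [s00|spos] := eqVneq s 0.
    have : t `^ p * m <= 0 by rewrite -s00.
    rewrite pmulr_lle0 // => tp0.
    have : t `^ p == 0 by rewrite eq_le tp0 powR_ge0.
    rewrite powR_eq0 => /andP[/eqP t00 _].
    by rewrite t00 mulr0 mule_ge0 ?poweR_ge0 ?lee_fin ?powR_ge0.
  by rewrite poweRyr ?mulf_neq0 ?invr_neq0 ?gt_eqF // muleC gt0_muley ?leey // lte_fin powR_gt0 // lt0r spos s0.
set K := s `^ (th * q).
have F4 x : (`|hB x| `^ q * (W x)%:E <= K%:E * (`|hA x| `^ p * (W x)%:E))%E.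
  rewrite muleA (muleC K%:E) (gee0_abs (hg0 _ _)) (gee0_abs (hg0 _ _)).
  apply: lee_wpmul2r; first by rewrite lee_fin.
  apply: le_trans (gt0_ler_poweR (ltW q0) _ _ (F3 x)) _.
  - by rewrite in_itv /= hg0 leey.
  - by rewrite in_itv /= leey mule_ge0 ?poweR_ge0 ?lee_fin ?powR_ge0.
  rewrite poweRM ?poweR_ge0 ?lee_fin ?powR_ge0 // -poweRrM divfK ?gt_eqF //.
  by rewrite poweR_EFin -powRrM.
have f0 x : (0 <= `|hB x| `^ q * (W x)%:E)%E by rewrite mule_ge0 ?poweR_ge0 ?lee_fin.
have := @nnint_le _ _ _ lam _ _ f0 F4.
rewrite nnint_scale ?powR_ge0 //; last first.
  by move=> x; rewrite mule_ge0 ?poweR_ge0 ?lee_fin.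
rewrite -/SA SAe -EFinM => Hle.
apply: le_trans (gt0_ler_poweR _ _ _ Hle) _.
- by rewrite invr_ge0 ltW.
- by rewrite in_itv /= leey integral_ge0 // => x _; exact: f0.
- by rewrite in_itv /= leey lee_fin mulr_ge0 ?powR_ge0.
rewrite mul1e !poweR_EFin lee_fin le_eqVlt; apply/orP; left; apply/eqP.
have [->|spos] := eqVneq s 0.
  by rewrite mulr0 !powR0 // invr_eq0 lt0r_neq0.
rewrite /K -{2}(powRr1 s0) -powRD; last by rewrite spos implybT.
rewrite -powRrM; congr (s `^ _).
rewrite /th; field; rewrite ?gt_eqF //.
Qed.
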